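(* Let $c\ge 2$ be the number of colors. Suppose a board with $m$ rows and $n$ columns has a perfect layout, and let $p$ and $q$ be respectively the number of rows and the number of columns that contain at least one sink. Then $$c(m+n)+(c-2)(p+q)\le mn-c.$$
   Context: A board is an $m\times n$ grid of unit cells in which exactly $c$ cells are sinks, one of each of $c$ colors, and all other cells are empty. A layout places, in some of the empty cells, arrows, each having one of the $c$ colors and one of the four cardinal directions. A packet of color $i$ may enter the grid through any unit edge of the outer boundary of the grid, into the adjacent cell, moving perpendicular to that edge into the grid; it moves one cell at a time in its current direction, and whenever it enters a cell containing an arrow of color $i$ its direction becomes that arrow's direction (arrows of other colors are ignored). The packet succeeds if it enters the sink of color $i$; it fails if it enters a sink of another color, leaves the grid, or travels forever without reaching a sink. A perfect layout is a layout in which every packet of every color entering through every boundary edge succeeds. *)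

(* Defs.v *)
From mathcomp Require Import all_boot.
Set Implicit Arguments. Unset Strict Implicit. Unset Printing Implicit Defensive.

(* Cardinal directions; rows are numbered top to bottom (North = decreasing
   row index), columns left to right (East = increasing column index). *)
Inductive dir := North | South | East | West.

Section Board.
Variables (c m n : nat).

Definition cell := ('I_m * 'I_n)%type.

Definition next_cell (x : cell) (d : dir) : option cell :=
  match d with
  | North => if val x.1 is i.+1 then omap (fun a : 'I_m => (a, x.2)) (insub i) else None
  | South => omap (fun a : 'I_m => (a, x.2)) (insub (val x.1).+1)
  | West  => if val x.2 is j.+1 then omap (fun b : 'I_n => (x.1, b)) (insub j) else None
  | East  => omap (fun b : 'I_n => (x.1, b)) (insub (val x.2).+1)
  end.

Definition layout := cell -> option ('I_c * dir).

Definition valid_layout (sink : 'I_c -> cell) (L : layout) : Prop :=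
  forall x, L x <> None -> forall k, x <> sink k.

Definition upd (L : layout) (col : 'I_c) (y : cell) (d : dir) : dir :=
  match L y with
  | Some (k, a) => if k == col then a else d
  | None => d
  end.

(* traj L col x0 d0 t = Some (cell, direction) of the packet after its t-th
   move (t = 0: having just entered x0 with direction d0), or None if it has
   left the grid. *)
Fixpoint traj (L : layout) (col : 'I_c) (x0 : cell) (d0 : dir) (t : nat)
  : option (cell * dir) :=
  match t with
  | 0 => Some (x0, upd L col x0 d0)
  | t'.+1 =>
    match traj L col x0 d0 t' with
    | None => None
    | Some (x, d) => omap (fun y => (y, upd L col y d)) (next_cell x d)
    end
  end.

(* (x, d) is an entry through a boundary edge: x is adjacent to that edge and
   d is perpendicular to it, pointing into the grid. *)
Definition entry (x : cell) (d : dir) : Prop :=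
  match d with
  | South => val x.1 = 0
  | North => val x.1 = m.-1
  | East  => val x.2 = 0
  | West  => val x.2 = n.-1
  end.

(* The packet succeeds: it enters the sink of its colour at some time t,
   never having entered a sink of another colour before (nor left the grid,
   which is implied by the trajectory being defined at time t). *)
Definition succeeds (sink : 'I_c -> cell) (L : layout) (col : 'I_c)
    (x0 : cell) (d0 : dir) : Prop :=
  exists t, (exists d, traj L col x0 d0 t = Some (sink col, d)) /\
    forall s, s < t -> forall y d k, traj L col x0 d0 s = Some (y, d) ->
      y = sink k -> k = col.

Definition perfect (sink : 'I_c -> cell) (L : layout) : Prop :=
  valid_layout sink L /\
  forall (col : 'I_c) (x : cell) (d : dir), entry x d -> succeeds sink L col x d.

Definition sink_rows (sink : 'I_c -> cell) : nat :=
  #|[set i : 'I_m | [exists k, (sink k).1 == i]]|.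
Definition sink_cols (sink : 'I_c -> cell) : nat :=
  #|[set j : 'I_n | [exists k, (sink k).2 == j]]|.

End Board.

(* Main.v *)
From HB Require Import structures.
Require Import Defs.
From mathcomp Require Import all_boot.
From mathcomp Require Import zify.

Set Implicit Arguments. Unset Strict Implicit. Unset Printing Implicit Defensive.

Definition dir_eqb (a b : dir) : bool :=
  match a, b with
  | North, North | South, South | East, East | West, West => true
  | _, _ => false end.
Lemma dir_eqP : Equality.axiom dir_eqb.
Proof. by case; case; constructor. Qed.
HB.instance Definition _ := hasDecEq.Build dir dir_eqP.

Definition sinkb c m n (sink : 'I_c -> cell m n) (x : cell m n) := [exists k, x == sink k].

Definition perpf c m n (L : layout c m n) (fw bw : dir) (i : 'I_c) (x : cell m n) : bool :=
  match L x with Some (k, d) => (k == i) && (d != fw) && (d != bw) | None => false end.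

Lemma perpf_sym c m n (L : layout c m n) fw bw i x : perpf L fw bw i x = perpf L bw fw i x.
Proof. rewrite /perpf; case: (L x) => [[k d]|] //; by rewrite -andbA [(_ != fw) && _]andbC andbA. Qed.

Section Walk.
Variables (c m n : nat) (sink : 'I_c -> cell m n) (L : layout c m n) (i : 'I_c).

Lemma traj_none x d t s : traj L i x d t = None -> traj L i x d (s + t) = None.
Proof. move=> H; elim: s => // s IH; by rewrite addSn /= IH. Qed.

Lemma upd_fw_bw y fw bw : upd L i y fw = fw -> upd L i y bw = fw \/ upd L i y bw = bw.
Proof.
rewrite /upd; case: (L y) => [[k a]|]; last by right.
by case: (k == i) => [->|_]; [left|right].
Qed.

Variables (N : nat) (pos : nat -> cell m n) (fw bw : dir).
Hypothesis Hfb : fw != bw.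
Hypothesis Hf : forall k, k < N ->
  next_cell (pos k) fw = if k.+1 < N then Some (pos k.+1) else None.
Hypothesis Hb : forall k, k < N ->
  next_cell (pos k) bw = if k is k'.+1 then Some (pos k') else None.

Definition Bk j := sinkb sink (pos j) || (upd L i (pos j) fw != fw).

Lemma fwd k : k < N -> (forall j, j < k -> ~~ Bk j) ->
  traj L i (pos 0) fw k = Some (pos k, upd L i (pos k) fw).
Proof.
elim: k => [//|k IH] HkN Hlt.
rewrite /= IH; last 2 first.
- lia.
- move=> j Hj; apply: Hlt; lia.
have: ~~ Bk k by apply: Hlt.
rewrite /Bk negb_or negbK => /andP[_ /eqP ->].
by rewrite Hf ?HkN //; lia.
Qed.

Lemma walk : 0 < N -> succeeds sink L i (pos 0) fw ->
  exists j, j < N /\ (forall j', j' < j -> ~~ sinkb sink (pos j')) /\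
   (pos j = sink i \/ (~~ sinkb sink (pos j) && perpf L fw bw i (pos j))).
Proof.
move=> HN [t [[d0 Ht] Hbef]].
case: (boolP [exists j : 'I_N, Bk j]).
- move=> /existsP [j0 Hj0].
  have exP : exists j, (j < N) && Bk j by exists j0; rewrite Hj0 ltn_ord.
  case: (ex_minnP exP) => j /andP[HjN HB] Hmin.
  have Hlt : forall j', j' < j -> ~~ Bk j'.
    move=> j' Hj'; apply/negP => Hb'.
    have := Hmin j'; rewrite Hb' andbT => /(_ (ltn_trans Hj' HjN)); lia.
  have Hns : forall j', j' < j -> ~~ sinkb sink (pos j').
    by move=> j' /Hlt; rewrite /Bk negb_or => /andP[].
  have Htj := fwd HjN Hlt.
  have Htge : j <= t.
    rewrite leqNgt; apply/negP => Htj'.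
    have := fwd (ltn_trans Htj' HjN) (fun j' Hj' => Hlt j' (ltn_trans Hj' Htj')).
    rewrite Ht => -[Hp _].
    by move: (Hns t Htj'); rewrite /sinkb -Hp; case/existsP; exists i.
  exists j; split => //; split => //.
  case: (boolP (sinkb sink (pos j))) => Hsj.
  + left. case/existsP: Hsj => k0 /eqP Hk0.
    move: Htge; rewrite leq_eqVlt => /orP[/eqP Etj|Hjt].
    * by move: Ht; rewrite -Etj Htj => -[->].
    * by rewrite Hk0 (Hbef j Hjt _ _ _ Htj Hk0).
  + right; apply/andP; split => //.
    move: HB; rewrite /Bk (negbTE Hsj) /= /upd /perpf.
    case EL: (L (pos j)) => [[k a]|]; last by rewrite eqxx.
    case: (k =P i) => [Eki|_]; last by rewrite eqxx.
    subst k => /= Haf; rewrite Haf /=.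
    apply/negP => /eqP Hab; subst a.
    have Hupdj : upd L i (pos j) fw = bw by rewrite /upd EL eqxx.
    have Inv : forall s, traj L i (pos 0) fw s = None \/
      exists k d, traj L i (pos 0) fw s = Some (pos k, d) /\
        ((d = fw /\ k < j) \/ (d = bw /\ k <= j)).
      elim=> [|s [IH|[k [d [IH Hkd]]]]].
      * right; exists 0, (upd L i (pos 0) fw); split => //.
        case: (posnP j) => [Ej|Hjpos].
        - by right; rewrite Ej in Hupdj.
        - left; split => //; have := Hlt 0 Hjpos; rewrite /Bk negb_or => /andP[_].
          by rewrite negbK => /eqP.
      * by left; rewrite /= IH.
      * rewrite /= IH.
        case: Hkd => [[-> Hkj]|[-> Hkj]].
        - rewrite Hf; last by lia.
          have -> : k.+1 < N by lia.
          right; exists k.+1, (upd L i (pos k.+1) fw); split => //.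
          have [Ekj|Hkj2] : k.+1 = j \/ k.+1 < j by lia.
          + by right; rewrite Ekj Hupdj; split.
          + left; split => //; have := Hlt _ Hkj2; rewrite /Bk negb_or => /andP[_].
            by rewrite negbK => /eqP.
        - rewrite Hb; last by lia.
          case: k Hkj IH => [|k] Hkj IH; first by left.
          right; exists k, (upd L i (pos k) bw); split => //.
          have : upd L i (pos k) fw = fw.
            by have := Hlt k Hkj; rewrite /Bk negb_or => /andP[_]; rewrite negbK => /eqP.
          move/(upd_fw_bw bw) => [->|->]; [left|right]; split => //; lia.
    case: (Inv t) => [|[k [d [Hk Hkd]]]]; first by rewrite Ht.
    move: Ht; rewrite Hk => -[Hpk _].
    have Hkj : k <= j by case: Hkd => -[_]; lia.
    move: Hkj; rewrite leq_eqVlt => /orP[/eqP Ekj|Hkj].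
    * by move: Hsj; rewrite -Ekj /sinkb Hpk; case/existsP; exists i.
    * by move: (Hns k Hkj); rewrite /sinkb Hpk; case/existsP; exists i.
- move=> /existsPn Hall.
  have Hlt : forall j', j' < N -> ~~ Bk j'.
    by move=> j' Hj'; apply: (Hall (Ordinal Hj')).
  have HtN : t < N.
    rewrite ltnNge; apply/negP => HNt.
    have HN1 : N.-1 < N by lia.
    have H1 := fwd HN1 (fun j' Hj' => Hlt j' (ltn_trans Hj' HN1)).
    have H2 : traj L i (pos 0) fw N = None.
      have -> : N = N.-1.+1 by lia.
      rewrite /= H1.
      have := Hlt _ HN1; rewrite /Bk negb_or negbK => /andP[_ /eqP ->].
      rewrite Hf //; have -> : N.-1.+1 < N = false by lia. done.
    have := traj_none (t - N) H2; rewrite subnK // Ht. done.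
  have := fwd HtN (fun j' Hj' => Hlt j' (ltn_trans Hj' HtN)); rewrite Ht => -[Hp _].
  have := Hlt _ HtN; rewrite /Bk negb_or => /andP[+ _].
  by rewrite /sinkb -Hp; case/existsP; exists i.
Qed.

End Walk.

Lemma sum_ge1 N (F : 'I_N -> nat) a : F a <= \sum_j F j.
Proof. by rewrite (bigD1 a) //= leq_addr. Qed.

Lemma sum_ge2 N (F : 'I_N -> nat) a b : a != b -> F a + F b <= \sum_j F j.
Proof.
move=> Hab; rewrite (bigD1 a) //= leq_add2l (bigD1 b) /= ?leq_addr //.
by rewrite eq_sym.
Qed.

Lemma sum_le1 c (P : 'I_c -> bool) :
  (forall i1 i2, P i1 -> P i2 -> i1 = i2) -> \sum_(i < c) P i <= 1.
Proof.
move=> HP; case: (pickP P) => [i0 Hi0|Hn].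
- rewrite (bigD1 i0) //= Hi0 big1 // => i Hi; case E: (P i) => //.
  by rewrite (HP _ _ E Hi0) eqxx in Hi.
- by rewrite big1 // => i _; rewrite Hn.
Qed.

Section Count.
Variables (c m n : nat) (sink : 'I_c -> cell m n) (hsink : injective sink).
Variables (A : 'I_c -> cell m n -> bool) (N : nat) (pos : nat -> cell m n).

Definition Wq (q : nat -> cell m n) (i : 'I_c) :=
  [exists j : 'I_N, (q j == sink i) &&
     [forall j' : 'I_N, (j' < j) ==> ~~ sinkb sink (q j')]].

Lemma sinkb_sink k : sinkb sink (sink k).
Proof. by apply/existsP; exists k. Qed.

Lemma Wq_uniq q i1 i2 : Wq q i1 -> Wq q i2 -> i1 = i2.
Proof.
move=> /existsP[j1 /andP[/eqP H1 /forallP F1]] /existsP[j2 /andP[/eqP H2 /forallP F2]].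
have E : j1 = j2.
  apply: val_inj; case: (ltngtP j1 j2) => // Hlt.
  - by have := F2 j1; rewrite Hlt H1 sinkb_sink.
  - by have := F1 j2; rewrite Hlt H2 sinkb_sink.
by apply: hsink; rewrite -H1 -H2 E.
Qed.

Hypothesis FW : forall i, exists j, j < N /\
  (forall j', j' < j -> ~~ sinkb sink (pos j')) /\
  (pos j = sink i \/ (~~ sinkb sink (pos j) && A i (pos j))).
Hypothesis BW : forall i, exists j, j < N /\
  (forall j', j' < j -> ~~ sinkb sink (pos (N.-1 - j'))) /\
  (pos (N.-1 - j) = sink i \/
     (~~ sinkb sink (pos (N.-1 - j)) && A i (pos (N.-1 - j)))).

Lemma count_nosink : (forall j, j < N -> ~~ sinkb sink (pos j)) ->
  c <= \sum_(i < c) \sum_(j < N) A i (pos j).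
Proof.
move=> Hns.
apply: (@leq_trans (\sum_(i < c) 1)); first by rewrite sum_nat_const card_ord muln1.
apply: leq_sum => i _.
case: (FW i) => j [Hj [_ [E|/andP[_ HA]]]].
- by move: (Hns j Hj); rewrite E sinkb_sink.
- by have := sum_ge1 (fun j : 'I_N => (A i (pos j) : nat)) (Ordinal Hj); rewrite /= HA.
Qed.

Lemma count_sink : (exists a, a < N /\ sinkb sink (pos a)) ->
  2 * c <= \sum_(i < c) \sum_(j < N) A i (pos j) + 2.
Proof.
move=> [a [HaN Ha]].
set X := fun i : 'I_c => \sum_(j < N) A i (pos j).
set q := fun k => pos (N.-1 - k).
have Claim : forall i, 2 <= X i + Wq pos i + Wq q i.
  move=> i.
  case: (FW i) => j1 [Hj1 [Hb1 C1]]; case: (BW i) => j2 [Hj2 [Hb2 C2]].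
  have W1 : pos j1 = sink i -> Wq pos i.
    move=> E; apply/existsP; exists (Ordinal Hj1); rewrite /= E eqxx /=.
    by apply/forallP => j'; apply/implyP => Hj'; exact: Hb1.
  have W2 : q j2 = sink i -> Wq q i.
    move=> E; apply/existsP; exists (Ordinal Hj2); rewrite /= E eqxx /=.
    by apply/forallP => j'; apply/implyP => Hj'; exact: Hb2.
  have L1 : ~~ sinkb sink (pos j1) -> j1 < a.
    move=> Hn; case: (ltngtP j1 a) => // H.
    - by move: (Hb1 a H); rewrite Ha.
    - by move: Hn; rewrite H Ha.
  have L2 : ~~ sinkb sink (pos (N.-1 - j2)) -> a < N.-1 - j2.
    move=> Hn; case: (ltngtP a (N.-1 - j2)) => // H.
    - have H' : N.-1 - a < j2 by lia.
      move: (Hb2 _ H'); have -> : N.-1 - (N.-1 - a) = a by lia.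
      by rewrite Ha.
    - by move: Hn; rewrite -H Ha.
  have HN2 : N.-1 - j2 < N by lia.
  case: C1 => [E1|/andP[Hn1 A1]]; case: C2 => [E2|/andP[Hn2 A2]].
  - by rewrite (W1 E1) (W2 E2) /= addn1 addn1.
  - rewrite (W1 E1).
    have := sum_ge1 (fun j : 'I_N => (A i (pos j) : nat)) (Ordinal HN2).
    rewrite /= A2 -/(X i) => H; lia.
  - rewrite (W2 E2).
    have := sum_ge1 (fun j : 'I_N => (A i (pos j) : nat)) (Ordinal Hj1).
    rewrite /= A1 -/(X i) => H; lia.
  - have Hne : Ordinal Hj1 != Ordinal HN2.
      apply/eqP => -[]; have := L1 Hn1; have := L2 Hn2; lia.
    have := sum_ge2 (fun j : 'I_N => (A i (pos j) : nat)) Hne.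
    rewrite /= A1 A2 -/(X i) => H; lia.
have S1 : \sum_(i < c) Wq pos i <= 1 by apply: sum_le1; exact: Wq_uniq.
have S2 : \sum_(i < c) Wq q i <= 1 by apply: sum_le1; exact: Wq_uniq.
have : \sum_(i < c) 2 <= \sum_(i < c) (X i + Wq pos i + Wq q i) by apply: leq_sum.
rewrite !big_split /= sum_nat_const card_ord -/(\sum_(i < c) X i).
move=> H; rewrite mulnC; apply: (leq_trans H); rewrite -addnA leq_add2l; exact: (leq_add S1 S2).
Qed.

End Count.

Lemma insub_inord p k : k < p.+1 -> insub k = Some (inord k : 'I_p.+1).
Proof.
move=> Hk; case: insubP => [u _ Hu|]; last by rewrite Hk.
by congr Some; apply: val_inj; rewrite /= Hu inordK.
Qed.

Lemma insub_none p k : p.+1 <= k -> insub k = None :> option 'I_p.+1.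
Proof. by move=> Hk; rewrite insubF // ltnNge Hk. Qed.

Section Inst.
Variables (c m n : nat) (sink : 'I_c -> cell m.+1 n.+1) (L : layout c m.+1 n.+1).
Hypothesis hperf : perfect sink L.

Lemma rowW r i : exists j, j < n.+1 /\
  (forall j', j' < j -> ~~ sinkb sink (r, inord j')) /\
  ((r, inord j) = sink i \/ (~~ sinkb sink (r, inord j) && perpf L East West i (r, inord j))).
Proof.
apply: (@walk c m.+1 n.+1 sink L i n.+1 (fun k => (r, inord k)) East West) => //.
- move=> k Hk /=; rewrite inordK //.
  case: ifP => H; first by rewrite insub_inord.
  by rewrite insub_none //; lia.
- move=> k Hk /=; rewrite inordK //.
  case: k Hk => [|k] Hk //=.
  by rewrite insub_inord //; lia.
- by apply: hperf.2; rewrite /entry /= inordK.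
Qed.

Lemma rowE r i : exists j, j < n.+1 /\
  (forall j', j' < j -> ~~ sinkb sink (r, inord (n - j'))) /\
  ((r, inord (n - j)) = sink i \/
    (~~ sinkb sink (r, inord (n - j)) && perpf L East West i (r, inord (n - j)))).
Proof.
suff [j [Hj [H1 H2]]] : exists j, j < n.+1 /\ (forall j', j' < j -> ~~ sinkb sink ((fun k => (r, inord (n - k))) j')) /\ ((fun k => (r, inord (n - k))) j = sink i \/ (~~ sinkb sink ((fun k => (r, inord (n - k))) j) && perpf L West East i ((fun k => (r, inord (n - k))) j))).
  by exists j; split => //; split => //; rewrite perpf_sym.
apply: (@walk c m.+1 n.+1 sink L i n.+1 (fun k => (r, inord (n - k))) West East) => //.
- move=> k Hk /=; rewrite inordK; last by lia.
  case: ifP => H.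
  + have -> : n - k = (n - k.+1).+1 by lia.
    by rewrite /= insub_inord //; lia.
  + by have -> : n - k = 0 by lia.
- move=> k Hk /=; rewrite inordK; last by lia.
  case: k Hk => [|k] Hk.
  + by rewrite subn0 insub_none.
  + have -> : (n - k.+1).+1 = n - k by lia.
    by rewrite insub_inord //; lia.
- by apply: hperf.2; rewrite /entry /= subn0 inordK.
Qed.

Lemma colS s i : exists j, j < m.+1 /\
  (forall j', j' < j -> ~~ sinkb sink (inord j', s)) /\
  ((inord j, s) = sink i \/ (~~ sinkb sink (inord j, s) && perpf L South North i (inord j, s))).
Proof.
apply: (@walk c m.+1 n.+1 sink L i m.+1 (fun k => (inord k, s)) South North) => //.
- move=> k Hk /=; rewrite inordK //.
  case: ifP => H; first by rewrite insub_inord.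
  by rewrite insub_none //; lia.
- move=> k Hk /=; rewrite inordK //.
  case: k Hk => [|k] Hk //=.
  by rewrite insub_inord //; lia.
- by apply: hperf.2; rewrite /entry /= inordK.
Qed.

Lemma colN s i : exists j, j < m.+1 /\
  (forall j', j' < j -> ~~ sinkb sink (inord (m - j'), s)) /\
  ((inord (m - j), s) = sink i \/
    (~~ sinkb sink (inord (m - j), s) && perpf L South North i (inord (m - j), s))).
Proof.
suff [j [Hj [H1 H2]]] : exists j, j < m.+1 /\ (forall j', j' < j -> ~~ sinkb sink ((fun k => (inord (m - k), s)) j')) /\ ((fun k => (inord (m - k), s)) j = sink i \/ (~~ sinkb sink ((fun k => (inord (m - k), s)) j) && perpf L North South i ((fun k => (inord (m - k), s)) j))).
  by exists j; split => //; split => //; rewrite perpf_sym.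
apply: (@walk c m.+1 n.+1 sink L i m.+1 (fun k => (inord (m - k), s)) North South) => //.
- move=> k Hk /=; rewrite inordK; last by lia.
  case: ifP => H.
  + have -> : m - k = (m - k.+1).+1 by lia.
    by rewrite /= insub_inord //; lia.
  + by have -> : m - k = 0 by lia.
- move=> k Hk /=; rewrite inordK; last by lia.
  case: k Hk => [|k] Hk.
  + by rewrite subn0 insub_none.
  + have -> : (m - k.+1).+1 = m - k by lia.
    by rewrite insub_inord //; lia.
- by apply: hperf.2; rewrite /entry /= subn0 inordK.
Qed.

End Inst.

Lemma main_pos (c m n : nat) (hc : 2 <= c)
    (sink : 'I_c -> cell m.+1 n.+1) (hsink : injective sink)
    (L : layout c m.+1 n.+1) (hperf : perfect sink L) :
  c * (m.+1 + n.+1) + (c - 2) * (sink_rows sink + sink_cols sink) <= m.+1 * n.+1 - c.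
Proof.
set V := fun i x => perpf L East West i x.
set H := fun i x => perpf L South North i x.
set p := sink_rows sink; set q := sink_cols sink.
have Rows : forall r : 'I_m.+1, c + (c - 2) * [exists k, (sink k).1 == r] <=
    \sum_(i < c) \sum_(s < n.+1) V i (r, s).
  move=> r.
  have E : \sum_(i < c) \sum_(s < n.+1) V i (r, s) =
      \sum_(i < c) \sum_(s < n.+1) V i ((fun k => (r, inord k)) s).
    by apply: eq_bigr => i _; apply: eq_bigr => s _; rewrite inord_val.
  rewrite E; case: (boolP [exists k, (sink k).1 == r]) => Hr /=.
  - have := count_sink hsink (A := V) (N := n.+1) (pos := fun k => (r, inord k))
      (rowW hperf r) (rowE hperf r).
    case/existsP: Hr => k /eqP Hk.
    have Hex : exists a, a < n.+1 /\ sinkb sink (r, inord a).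
      exists (sink k).2; split => //; apply/existsP; exists k.
      by rewrite inord_val -Hk; case: (sink k) => a b; rewrite eqxx.
    move=> /(_ Hex) Hs; rewrite muln1 -(leq_add2r 2); apply: (leq_trans _ Hs); lia.
  - have := count_nosink (A := V) (N := n.+1) (pos := fun k => (r, inord k))
      (rowW hperf r).
    have Hns : forall j, j < n.+1 -> ~~ sinkb sink (r, inord j).
      move=> j _; apply/existsP => -[k /eqP Ek]; move/negP: Hr; apply.
      by apply/existsP; exists k; rewrite -Ek.
    move=> /(_ Hns) Hs; rewrite muln0 addn0; exact: Hs.
have Cols : forall s : 'I_n.+1, c + (c - 2) * [exists k, (sink k).2 == s] <=
    \sum_(i < c) \sum_(r < m.+1) H i (r, s).
  move=> s.
  have E : \sum_(i < c) \sum_(r < m.+1) H i (r, s) =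
      \sum_(i < c) \sum_(r < m.+1) H i ((fun k => (inord k, s)) r).
    by apply: eq_bigr => i _; apply: eq_bigr => r _; rewrite inord_val.
  rewrite E; case: (boolP [exists k, (sink k).2 == s]) => Hr /=.
  - have := count_sink hsink (A := H) (N := m.+1) (pos := fun k => (inord k, s))
      (colS hperf s) (colN hperf s).
    case/existsP: Hr => k /eqP Hk.
    have Hex : exists a, a < m.+1 /\ sinkb sink (inord a, s).
      exists (sink k).1; split => //; apply/existsP; exists k.
      by rewrite inord_val -Hk; case: (sink k) => a b; rewrite eqxx.
    move=> /(_ Hex) Hs; rewrite muln1 -(leq_add2r 2); apply: (leq_trans _ Hs); lia.
  - have := count_nosink (A := H) (N := m.+1) (pos := fun k => (inord k, s))
      (colS hperf s).
    have Hns : forall j, j < m.+1 -> ~~ sinkb sink (inord j, s).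
      move=> j _; apply/existsP => -[k /eqP Ek]; move/negP: Hr; apply.
      by apply/existsP; exists k; rewrite -Ek.
    move=> /(_ Hns) Hs; rewrite muln0 addn0; exact: Hs.
set S := [set x : 'I_m.+1 * 'I_n.+1 | sinkb sink x].
have cardS : #|S| = c.
  have -> : S = [set sink k | k in 'I_c].
    apply/setP => x; rewrite !inE; apply/existsP/imsetP => [[k /eqP ->]|[k _ ->]].
    + by exists k.
    + by exists k.
  by rewrite card_imset // card_ord.
have cardCS : #|~: S| = m.+1 * n.+1 - c.
  by have := cardsC S; rewrite cardS card_prod !card_ord; lia.
have Tot : \sum_(x : 'I_m.+1 * 'I_n.+1) \sum_(i < c) (V i x + H i x) <= m.+1 * n.+1 - c.
  rewrite -cardCS -sum1_card .
  rewrite [X in _ <= X]big_mkcond /=; apply: leq_sum => x _.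
  rewrite /V /H /perpf; case EL: (L x) => [[k d]|]; last by rewrite big1.
  have Hx : x \in ~: S.
    rewrite !inE; apply/existsP => -[k' /eqP Ek'].
    by apply: (hperf.1 x _ k' Ek'); rewrite EL.
  rewrite Hx (bigD1 k) //= big1 => [|i Hi]; first by case: d {EL}; rewrite eqxx.
  by rewrite eq_sym (negbTE Hi).
have DV : \sum_(x : 'I_m.+1 * 'I_n.+1) \sum_(i < c) V i x =
    \sum_(r < m.+1) \sum_(i < c) \sum_(s < n.+1) V i (r, s).
  rewrite (eq_bigr (fun r => \sum_(s < n.+1) \sum_(i < c) V i (r, s))); last first.
    by move=> r _; rewrite exchange_big.
  by rewrite [RHS]pair_bigA /=; apply: eq_bigr => -[r s].
have DH : \sum_(x : 'I_m.+1 * 'I_n.+1) \sum_(i < c) H i x =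
    \sum_(s < n.+1) \sum_(i < c) \sum_(r < m.+1) H i (r, s).
  rewrite (eq_bigr (fun s => \sum_(r < m.+1) \sum_(i < c) H i (r, s))); last first.
    by move=> s _; rewrite exchange_big.
  rewrite [RHS]exchange_big [RHS]pair_bigA /=; by apply: eq_bigr => -[r s].
have SR : \sum_(r < m.+1) (c + (c - 2) * [exists k, (sink k).1 == r]) = m.+1 * c + (c - 2) * p.
  rewrite big_split /= sum_nat_const card_ord -big_distrr /=; congr (_ + _ * _).
  rewrite /p /sink_rows -sum1_card [RHS]big_mkcond /=. by apply: eq_bigr => r _; rewrite inE.
have SC : \sum_(s < n.+1) (c + (c - 2) * [exists k, (sink k).2 == s]) = n.+1 * c + (c - 2) * q.
  rewrite big_split /= sum_nat_const card_ord -big_distrr /=; congr (_ + _ * _).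
  rewrite /q /sink_cols -sum1_card [RHS]big_mkcond /=; by apply: eq_bigr => r _; rewrite inE.
have BV : \sum_(r < m.+1) (c + (c - 2) * [exists k, (sink k).1 == r]) <=
    \sum_(r < m.+1) \sum_(i < c) \sum_(s < n.+1) V i (r, s) by apply: leq_sum => r _; exact: Rows.
rewrite SR -DV in BV.
have BH : \sum_(s < n.+1) (c + (c - 2) * [exists k, (sink k).2 == s]) <=
    \sum_(s < n.+1) \sum_(i < c) \sum_(r < m.+1) H i (r, s) by apply: leq_sum => s _; exact: Cols.
rewrite SC -DH in BH.
rewrite (eq_bigr (fun x => \sum_(i < c) V i x + \sum_(i < c) H i x)) in Tot; last first.
  by move=> x _; rewrite big_split.
rewrite big_split /= in Tot.
have -> : c * (m.+1 + n.+1) + (c - 2) * (p + q) = (m.+1 * c + (c - 2) * p) + (n.+1 * c + (c - 2) * q) by rewrite !mulnDr (mulnC c m.+1) (mulnC c n.+1); lia.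
exact: leq_trans (leq_add BV BH) Tot.
Qed.

Theorem mainTheorem11 (c m n : nat) (hc : 2 <= c)
    (sink : 'I_c -> cell m n) (hsink : injective sink)
    (L : layout c m n) (hperf : perfect sink L) :
  c * (m + n) + (c - 2) * (sink_rows sink + sink_cols sink) <= m * n - c.
Proof.
have k0 : 'I_c := Ordinal (ltnW hc).
case: m sink hsink L hperf => [|m] sink hsink L hperf.
  by case: (sink k0) => -[a Ha].
case: n sink hsink L hperf => [|n] sink hsink L hperf.
  by case: (sink k0) => _ [b Hb].
exact: (@main_pos c m n hc sink hsink L hperf).
Qed.
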